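(* Let $\alpha_1,\dots,\alpha_5\le0$ be integers, let $r:=-(\alpha_1+\cdots+\alpha_5)$, let $a$ be an integer with $0\le a\le r$ and $b\in\mathbb Z$. Then $J_{11}^a\,q^b\,\tilde P_1^{\alpha_1}\tilde P_2^{\alpha_2}\tilde P_3^{\alpha_3}\tilde P_4^{\alpha_4}\tilde P_5^{\alpha_5}$ has all (Laurent) coefficients non-negative.
   Context: $(x;q)_\infty=\prod_{i\ge0}(1-xq^i)$; $J_{11}:=(q^{11};q^{11})_\infty$; $\tilde P_a:=(q^a;q^{11})_\infty(q^{11-a};q^{11})_\infty$ for $1\le a\le 5$. *)

(* Defs.v *)
(* Formal power series in q with integer coefficients are
   handled through their truncations: the coefficient of q^n of a product
   of the series below only depends on the factors and terms of degree <= n,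
   so we compute it inside {poly int} from truncations at order n. *)
From HB Require Import structures.
From mathcomp Require Import all_boot all_order all_algebra.
Set Implicit Arguments. Unset Strict Implicit. Unset Printing Implicit Defensive.
Import Order.TTheory GRing.Theory Num.Theory.
Local Open Scope ring_scope.

(* truncation at degree N of 1/(1 - q^k), valid for k >= 1 *)
Definition geom_trunc (k N : nat) : {poly int} := \sum_(j < N.+1) 'X^(k * j).

(* (q^s; q^11)_oo, keeping all factors that can affect degrees <= N (s >= 1) *)
Definition poch_trunc (s N : nat) : {poly int} :=
  \prod_(i < N.+1) (1 - 'X^(s + 11 * i)).

(* truncation of 1/(q^s; q^11)_oo = prod_i 1/(1 - q^(s+11 i)), s >= 1 *)
Definition poch_inv_trunc (s N : nat) : {poly int} :=
  \prod_(i < N.+1) geom_trunc (s + 11 * i) N.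

(* J_11 = (q^11;q^11)_oo *)
Definition J11_trunc (N : nat) : {poly int} := poch_trunc 11 N.

(* 1 / Ptilde_a = 1 / ((q^a;q^11)_oo (q^(11-a);q^11)_oo), 1 <= a <= 5 *)
Definition Ptilde_inv_trunc (a N : nat) : {poly int} :=
  poch_inv_trunc a N * poch_inv_trunc (11 - a) N.

(* coefficient of q^n in the power series
   J_11^a * Ptilde_1^(-e1) * ... * Ptilde_5^(-e5)  (e_i >= 0) *)
Definition series_coef (a e1 e2 e3 e4 e5 n : nat) : int :=
  ((J11_trunc n) ^+ a * (Ptilde_inv_trunc 1 n) ^+ e1 * (Ptilde_inv_trunc 2 n) ^+ e2
   * (Ptilde_inv_trunc 3 n) ^+ e3 * (Ptilde_inv_trunc 4 n) ^+ e4
   * (Ptilde_inv_trunc 5 n) ^+ e5)`_n.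

Definition laurent_coef (a : nat) (b : int) (al1 al2 al3 al4 al5 : int) (m : int)
  : int :=
  if (0 <= m - b) then
    series_coef a `|al1|%N `|al2|%N `|al3|%N `|al4|%N `|al5|%N `|m - b|%N
  else 0.

(* Main.v *)
Require Import Defs.
From mathcomp Require Import all_boot all_order all_algebra.
From mathcomp Require Import ring zify.
Set Implicit Arguments. Unset Strict Implicit.
Import Order.TTheory GRing.Theory Num.Theory.
Local Open Scope ring_scope.

Section Aux.
Variable N : nat.

Definition cg (p q : {poly int}) := exists r, p - q = 'X^(N.+1) * r.

Lemma cg_refl p : cg p p.
Proof. by exists 0; rewrite subrr mulr0. Qed.

Lemma cg_sym p q : cg p q -> cg q p.
Proof. by case=> r H; exists (- r); rewrite mulrN -H opprB. Qed.

Lemma cg_trans p q s : cg p q -> cg q s -> cg p s.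
Proof.
case=> r1 H1 [r2 H2]; exists (r1 + r2).
have -> : p - s = (p - q) + (q - s) by ring.
by rewrite H1 H2 mulrDr.
Qed.

Lemma cg_add p1 q1 p2 q2 : cg p1 q1 -> cg p2 q2 -> cg (p1 + p2) (q1 + q2).
Proof.
case=> r1 H1 [r2 H2]; exists (r1 + r2).
have -> : p1 + p2 - (q1 + q2) = (p1 - q1) + (p2 - q2) by ring.
by rewrite H1 H2 mulrDr.
Qed.

Lemma cg_mul p1 q1 p2 q2 : cg p1 q1 -> cg p2 q2 -> cg (p1 * p2) (q1 * q2).
Proof.
case=> r1 H1 [r2 H2]; exists (p1 * r2 + r1 * q2).
have -> : p1 * p2 - q1 * q2 = p1 * (p2 - q2) + (p1 - q1) * q2 by ring.
rewrite H1 H2; ring.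
Qed.

Lemma cg_mull c p q : cg p q -> cg (c * p) (c * q).
Proof. by apply: cg_mul; apply: cg_refl. Qed.

Lemma cg_Xbig m : (N < m)%N -> cg 'X^m 0.
Proof. by move=> h; exists 'X^(m - N.+1); rewrite subr0 -exprD subnKC. Qed.

Lemma cg_coef p q i : cg p q -> (i <= N)%N -> p`_i = q`_i.
Proof.
case=> r H hi; apply/eqP; rewrite -subr_eq0 -coefB H coefXnM.
by rewrite ltnS hi.
Qed.

Lemma cg_sum (I : Type) (r : seq I) (P : pred I) (F G : I -> {poly int}) :
  (forall i, P i -> cg (F i) (G i)) ->
  cg (\sum_(i <- r | P i) F i) (\sum_(i <- r | P i) G i).
Proof.
move=> H; apply: (big_ind2 cg); [exact: cg_refl| |exact: H].
by move=> *; apply: cg_add.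
Qed.

Lemma cg_prod (I : Type) (r : seq I) (P : pred I) (F G : I -> {poly int}) :
  (forall i, P i -> cg (F i) (G i)) ->
  cg (\prod_(i <- r | P i) F i) (\prod_(i <- r | P i) G i).
Proof.
move=> H; apply: (big_ind2 cg); [exact: cg_refl| |exact: H].
by move=> *; apply: cg_mul.
Qed.

Definition nonneg (p : {poly int}) := forall i, 0 <= p`_i.

Lemma nonneg_add p q : nonneg p -> nonneg q -> nonneg (p + q).
Proof. by move=> hp hq i; rewrite coefD addr_ge0. Qed.

Lemma nonneg_mul p q : nonneg p -> nonneg q -> nonneg (p * q).
Proof.
move=> hp hq i; rewrite coefM; apply: sumr_ge0 => j _; exact: mulr_ge0.
Qed.

Lemma nonneg1 : nonneg 1.
Proof. by move=> i; rewrite coef1; case: (i == 0)%N. Qed.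

Lemma nonneg0 : nonneg 0.
Proof. by move=> i; rewrite coef0. Qed.

Lemma nonnegXn m : nonneg 'X^m.
Proof. by move=> i; rewrite coefXn; case: (i == m). Qed.

Lemma nonneg_sum (I : Type) (r : seq I) (P : pred I) (F : I -> {poly int}) :
  (forall i, P i -> nonneg (F i)) -> nonneg (\sum_(i <- r | P i) F i).
Proof.
move=> H; apply: (big_ind nonneg); [exact: nonneg0| |exact: H].
by move=> *; apply: nonneg_add.
Qed.

Lemma nonneg_prod (I : Type) (r : seq I) (P : pred I) (F : I -> {poly int}) :
  (forall i, P i -> nonneg (F i)) -> nonneg (\prod_(i <- r | P i) F i).
Proof.
move=> H; apply: (big_ind nonneg); [exact: nonneg1| |exact: H].
by move=> *; apply: nonneg_mul.
Qed.

Lemma nonneg_exp p k : nonneg p -> nonneg (p ^+ k).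
Proof.
move=> hp; elim: k => [|k IH]; first by rewrite expr0; exact: nonneg1.
by rewrite exprS; apply: nonneg_mul.
Qed.

Lemma nonneg_geom m : nonneg (geom_trunc m N).
Proof. by apply: nonneg_sum => i _; apply: nonnegXn. Qed.

Lemma nonneg_pinv s : nonneg (poch_inv_trunc s N).
Proof. by apply: nonneg_prod => i _; apply: nonneg_geom. Qed.

Definition good p := exists q, nonneg q /\ cg p q.

Lemma good_nonneg p : nonneg p -> good p.
Proof. by move=> h; exists p; split=> //; apply: cg_refl. Qed.

Lemma good_mul p q : good p -> good q -> good (p * q).
Proof.
case=> p' [h1 h2] [q' [h3 h4]]; exists (p' * q'); split.
  exact: nonneg_mul.
exact: cg_mul.
Qed.

Lemma geomK m : (0 < m)%N -> cg ((1 - 'X^m) * geom_trunc m N) 1.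
Proof.
move=> hm.
have E : forall K, (1 - 'X^m) * \sum_(j < K) 'X^(m * j) = 1 - 'X^(m * K)
    :> {poly int}.
  elim=> [|K IH]; first by rewrite big_ord0 muln0 expr0 mulr0 subrr.
  rewrite big_ord_recr /= mulrDr IH mulnS exprD; ring.
rewrite /geom_trunc E; exists (- 'X^(m * N.+1 - N.+1)).
rewrite mulrN -exprD subnKC; last by rewrite leq_pmull.
ring.
Qed.

Lemma geom_big m : (N < m)%N -> cg (geom_trunc m N) 1.
Proof.
move=> hm.
apply: (@cg_trans _ ((1 - 'X^m) * geom_trunc m N)); last by apply: geomK; lia.
apply: cg_sym.
have -> : (1 - 'X^m) * geom_trunc m N = geom_trunc m N - 'X^m * geom_trunc m N
  by ring.
have := cg_mull (geom_trunc m N) (cg_Xbig hm).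
case=> r H; exists (- r); rewrite mulrN -H; ring.
Qed.

Lemma one_sub_big m : (N < m)%N -> cg (1 - 'X^m) 1.
Proof.
move=> hm; case: (cg_Xbig hm) => r H; exists (- r); rewrite mulrN -H; ring.
Qed.

Lemma poch_shift s : cg (poch_trunc s N) ((1 - 'X^s) * poch_trunc (s + 11) N).
Proof.
rewrite /poch_trunc big_ord_recl big_ord_recr /= addn0.
apply: cg_mull.
have -> : \prod_(i < N) (1 - 'X^(s + 11 * bump 0 i)) =
          \prod_(i < N) (1 - 'X^(s + 11 + 11 * i)) :> {poly int}.
  by apply: eq_bigr => i _; rewrite /bump /= add1n mulnS addnA.
rewrite -{1}(mulr1 (\prod_(i < N) _)); apply: cg_mull.
apply: cg_sym; apply: one_sub_big; lia.
Qed.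

Lemma pinv_shift s :
  cg (poch_inv_trunc s N) (geom_trunc s N * poch_inv_trunc (s + 11) N).
Proof.
rewrite /poch_inv_trunc big_ord_recl big_ord_recr /= addn0.
apply: cg_mull.
have -> : \prod_(i < N) geom_trunc (s + 11 * bump 0 i) N =
          \prod_(i < N) geom_trunc (s + 11 + 11 * i) N.
  by apply: eq_bigr => i _; rewrite /bump /= add1n mulnS addnA.
rewrite -{1}(mulr1 (\prod_(i < N) _)); apply: cg_mull.
apply: cg_sym; apply: geom_big; lia.
Qed.

Lemma poch_big s : (N < s)%N -> cg (poch_trunc s N) 1.
Proof.
move=> hs; apply: (@cg_trans _ (\prod_(i < N.+1) (1 : {poly int}))).
  apply: cg_prod => i _; apply: one_sub_big; lia.
rewrite big1 //; exact: cg_refl.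
Qed.

Lemma pinv_big s : (N < s)%N -> cg (poch_inv_trunc s N) 1.
Proof.
move=> hs; apply: (@cg_trans _ (\prod_(i < N.+1) (1 : {poly int}))).
  apply: cg_prod => i _; apply: geom_big; lia.
rewrite big1 //; exact: cg_refl.
Qed.

Variable t : nat.
Hypothesis t_pos : (0 < t)%N.

Definition L s := poch_trunc (t + s) N * poch_inv_trunc s N * poch_inv_trunc t N.

Definition d k := (\prod_(j < k) geom_trunc (11 * j.+1) N) *
                  poch_inv_trunc (t + 11 * k) N.

Definition R s := \sum_(k < N.+1) 'X^(s * k) * d k.

Lemma nonneg_R s : nonneg (R s).
Proof.
apply: nonneg_sum => k _; apply: nonneg_mul; first exact: nonnegXn.
apply: nonneg_mul; last exact: nonneg_pinv.
by apply: nonneg_prod => j _; apply: nonneg_geom.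
Qed.

Lemma d_rec k : cg ((1 - 'X^(11 * k.+1)) * d k.+1) ((1 - 'X^(t + 11 * k)) * d k).
Proof.
rewrite /d big_ord_recr /=.
set A := \prod_(j < k) _.
apply: (@cg_trans _ (A * poch_inv_trunc (t + 11 * k + 11) N)).
  have -> : (1 - 'X^(11 * k.+1)) * (A * geom_trunc (11 * k.+1) N *
             poch_inv_trunc (t + 11 * k.+1) N) =
            A * poch_inv_trunc (t + 11 * k.+1) N *
            ((1 - 'X^(11 * k.+1)) * geom_trunc (11 * k.+1) N) by ring.
  rewrite mulnS (addnC 11 (11 * k)) addnA.
  rewrite -{2}(mulr1 (A * _)); apply: cg_mull; apply: geomK; lia.
apply: cg_sym.
have -> : (1 - 'X^(t + 11 * k)) * (A * poch_inv_trunc (t + 11 * k) N) =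
          A * ((1 - 'X^(t + 11 * k)) * poch_inv_trunc (t + 11 * k) N) by ring.
apply: cg_mull.
apply: (@cg_trans _ ((1 - 'X^(t + 11 * k)) * (geom_trunc (t + 11 * k) N *
           poch_inv_trunc (t + 11 * k + 11) N))).
  apply: cg_mull; apply: pinv_shift.
rewrite mulrA -{2}(mul1r (poch_inv_trunc _ _)).
apply: cg_mul; last exact: cg_refl.
apply: geomK; lia.
Qed.

Lemma R_rec s : (0 < s)%N ->
  cg ((1 - 'X^s) * R s) ((1 - 'X^(t + s)) * R (s + 11)).
Proof.
move=> hs.
pose a k := 'X^(s * k) * ((1 - 'X^(11 * k)) * d k).
suff : cg ((1 - 'X^s) * R s - (1 - 'X^(t + s)) * R (s + 11)) 0.
  by case=> r H; exists r; rewrite -H subr0.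
have E1 : (1 - 'X^s) * R s - (1 - 'X^(t + s)) * R (s + 11) =
  \sum_(k < N.+1) a k -
  \sum_(k < N.+1) 'X^(s * k.+1) * ((1 - 'X^(t + 11 * k)) * d k).
  rewrite /R /a !mulr_sumr -sumrB -sumrB; apply: eq_bigr => k _.
  rewrite mulnS mulnDl !exprD; ring.
rewrite E1.
apply: (@cg_trans _ (\sum_(k < N.+1) a k - \sum_(k < N.+1) a k.+1)).
  apply: cg_add; first exact: cg_refl.
  have Hs : cg (\sum_(k < N.+1) 'X^(s * k.+1) * ((1 - 'X^(t + 11 * k)) * d k))
              (\sum_(k < N.+1) a k.+1).
    apply: cg_sum => k _.
    rewrite /a; apply: cg_mull; apply: cg_sym; apply: d_rec.
  case: Hs => r H.
  by exists (- r); rewrite -opprD mulrN -H opprB.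
rewrite big_ord_recl [X in _ - X]big_ord_recr /=.
have a0 : a 0%N = 0 by rewrite /a !muln0 !expr0 subrr mul0r mulr0.
rewrite a0 add0r.
have -> : \sum_(i < N) a (bump 0 i) = \sum_(i < N) a i.+1
  by apply: eq_bigr => i _; rewrite /bump add1n.
rewrite opprD addrA subrr add0r.
have hX : (N < s * N.+1)%N by rewrite leq_pmull.
case: (cg_Xbig hX) => r H; exists (- (r * ((1 - 'X^(11 * N.+1)) * d N.+1))).
rewrite /a subr0; move: H; rewrite subr0 => ->; ring.
Qed.

Lemma L_rec s : cg (L s) (geom_trunc s N * (1 - 'X^(t + s)) * L (s + 11)).
Proof.
rewrite /L.
apply: (@cg_trans _ ((1 - 'X^(t + s)) * poch_trunc (t + s + 11) N *
   (geom_trunc s N * poch_inv_trunc (s + 11) N) * poch_inv_trunc t N)).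
  apply: cg_mul; last exact: cg_refl.
  apply: cg_mul; [exact: poch_shift | exact: pinv_shift].
rewrite addnA; have -> : forall A B C D E : {poly int},
  A * B * (C * D) * E = C * A * (B * D * E) by move=> *; ring.
exact: cg_refl.
Qed.

Lemma LR : forall k s, (0 < s)%N -> (N < s + 11 * k)%N -> cg (L s) (R s).
Proof.
elim=> [|k IH] s hs hN.
  rewrite muln0 addn0 in hN.
  apply: (@cg_trans _ (poch_inv_trunc t N)).
    rewrite /L -{2}(mul1r (poch_inv_trunc t N)); apply: cg_mul;
      last exact: cg_refl.
    rewrite -(mul1r 1); apply: cg_mul; [apply: poch_big | apply: pinv_big]; lia.
  rewrite /R big_ord_recl /= muln0 expr0 mul1r.
  have -> : d 0 = poch_inv_trunc t N by rewrite /d big_ord0 mul1r muln0 addn0.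
  rewrite -{1}(addr0 (poch_inv_trunc t N)); apply: cg_add; first exact: cg_refl.
  apply: (@cg_trans _ (\sum_(i < N) (0 : {poly int}))).
    rewrite big1 //; exact: cg_refl.
  apply: cg_sum => i _; apply: cg_sym.
  rewrite -(mul0r (d (bump 0 i))); apply: cg_mul; last exact: cg_refl.
  apply: cg_Xbig; rewrite /=.
  by apply: (leq_trans hN); rewrite leq_pmulr.
have IH' := IH (s + 11) (ltn_addr _ hs) (_ : (N < s + 11 + 11 * k)%N).
apply: (cg_trans (L_rec s)).
apply: (@cg_trans _ (geom_trunc s N * (1 - 'X^(t + s)) * R (s + 11))).
  apply: cg_mull; apply: IH'; lia.
apply: (@cg_trans _ (geom_trunc s N * ((1 - 'X^s) * R s))).
  rewrite -mulrA; apply: cg_mull; apply: cg_sym; exact: R_rec.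
rewrite mulrA -{2}(mul1r (R s)); apply: cg_mul; last exact: cg_refl.
rewrite mulrC; apply: geomK; lia.
Qed.

End Aux.

Lemma core N c : (0 < c)%N -> (c < 11)%N ->
  good N (J11_trunc N * Ptilde_inv_trunc c N).
Proof.
move=> h1 h2.
have ht : (0 < 11 - c)%N by rewrite subn_gt0.
exists (R N (11 - c) c); split; first exact: nonneg_R.
have := @LR N (11 - c) ht N.+1 c h1 (_ : (N < c + 11 * N.+1)%N).
rewrite /L subnK; last exact: ltnW.
rewrite /J11_trunc /Ptilde_inv_trunc mulrA; apply; lia.
Qed.

Lemma main_good N a : forall e1 e2 e3 e4 e5,
  (a <= e1 + e2 + e3 + e4 + e5)%N ->
  good N ((J11_trunc N) ^+ a * (Ptilde_inv_trunc 1 N) ^+ e1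
   * (Ptilde_inv_trunc 2 N) ^+ e2 * (Ptilde_inv_trunc 3 N) ^+ e3
   * (Ptilde_inv_trunc 4 N) ^+ e4 * (Ptilde_inv_trunc 5 N) ^+ e5).
Proof.
have nP c : nonneg (Ptilde_inv_trunc c N) by apply: nonneg_mul; apply: nonneg_pinv.
elim: a => [|a IH] e1 e2 e3 e4 e5 H.
  apply: good_nonneg; rewrite expr0 mul1r.
  by repeat apply: nonneg_mul; apply: nonneg_exp.
set J := J11_trunc N.
set P1 := Ptilde_inv_trunc 1 N; set P2 := Ptilde_inv_trunc 2 N.
set P3 := Ptilde_inv_trunc 3 N; set P4 := Ptilde_inv_trunc 4 N.
set P5 := Ptilde_inv_trunc 5 N.
case: e1 H => [|e1] H.
case: e2 H => [|e2] H.
case: e3 H => [|e3] H.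
case: e4 H => [|e4] H.
case: e5 H => [|e5] H.
- by [].
- have -> : J ^+ a.+1 * P1 ^+ 0 * P2 ^+ 0 * P3 ^+ 0 * P4 ^+ 0 * P5 ^+ e5.+1 =
    (J * P5) * (J ^+ a * P1 ^+ 0 * P2 ^+ 0 * P3 ^+ 0 * P4 ^+ 0 * P5 ^+ e5)
    by rewrite !exprS; ring.
  by apply: good_mul; [apply: core | apply: IH; lia].
- have -> : J ^+ a.+1 * P1 ^+ 0 * P2 ^+ 0 * P3 ^+ 0 * P4 ^+ e4.+1 * P5 ^+ e5 =
    (J * P4) * (J ^+ a * P1 ^+ 0 * P2 ^+ 0 * P3 ^+ 0 * P4 ^+ e4 * P5 ^+ e5)
    by rewrite !exprS; ring.
  by apply: good_mul; [apply: core | apply: IH; lia].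
- have -> : J ^+ a.+1 * P1 ^+ 0 * P2 ^+ 0 * P3 ^+ e3.+1 * P4 ^+ e4 * P5 ^+ e5 =
    (J * P3) * (J ^+ a * P1 ^+ 0 * P2 ^+ 0 * P3 ^+ e3 * P4 ^+ e4 * P5 ^+ e5)
    by rewrite !exprS; ring.
  by apply: good_mul; [apply: core | apply: IH; lia].
- have -> : J ^+ a.+1 * P1 ^+ 0 * P2 ^+ e2.+1 * P3 ^+ e3 * P4 ^+ e4 * P5 ^+ e5 =
    (J * P2) * (J ^+ a * P1 ^+ 0 * P2 ^+ e2 * P3 ^+ e3 * P4 ^+ e4 * P5 ^+ e5)
    by rewrite !exprS; ring.
  by apply: good_mul; [apply: core | apply: IH; lia].
- have -> : J ^+ a.+1 * P1 ^+ e1.+1 * P2 ^+ e2 * P3 ^+ e3 * P4 ^+ e4 * P5 ^+ e5 =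
    (J * P1) * (J ^+ a * P1 ^+ e1 * P2 ^+ e2 * P3 ^+ e3 * P4 ^+ e4 * P5 ^+ e5)
    by rewrite !exprS; ring.
  by apply: good_mul; [apply: core | apply: IH; lia].
Qed.

Theorem lemma6p2 (al1 al2 al3 al4 al5 : int) (a : nat) (b : int) :
  al1 <= 0 -> al2 <= 0 -> al3 <= 0 -> al4 <= 0 -> al5 <= 0 ->
  (a%:Z <= - (al1 + al2 + al3 + al4 + al5)) ->
  forall m : int, 0 <= laurent_coef a b al1 al2 al3 al4 al5 m.
Proof.
move=> h1 h2 h3 h4 h5 ha m; rewrite /laurent_coef.
case: ifP => // _; rewrite /series_coef.
set n := `|m - b|%N.
have H : (a <= `|al1| + `|al2| + `|al3| + `|al4| + `|al5|)%N by lia.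
case: (main_good n H) => Q [hQ hc].
by rewrite (cg_coef hc (leqnn n)).
Qed.
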